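(* Let $X,Y\subseteq\{a,b\}^*$ be disjoint finite sets of words with $1\le|X|\le|Y|$. Then there is a $2^{|X|}$-state MCQFA (with complex amplitudes) that accepts every word of $X$ with probability $0$ and every word of $Y$ with nonzero probability; i.e. $X$ and $Y$ are separated by a nondeterministic MCQFA with $2^{|X|}$ states.
   Context: An $n$-state Moore–Crutchfield quantum finite automaton (MCQFA) over a finite alphabet $\Sigma$ consists of a unitary matrix $U_\sigma\in\mathbb{C}^{n\times n}$ for each $\sigma\in\Sigma$, an initial unit vector $|u_0\rangle\in\mathbb{C}^n$ and a set of accepting basis states; on input $w=w_1\cdots w_k$ the final state is $U_{w_k}\cdots U_{w_1}|u_0\rangle$ and the acceptance probability is the sum of the squared moduli of its accepting coordinates. Disjoint sets $X,Y$ are separated by a nondeterministic MCQFA if every word of one set is accepted with nonzero probability and every word of the other with probability $0$. *)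

(* Defs.v *)
From HB Require Import structures.
From mathcomp Require Import all_boot all_order all_algebra.
Set Implicit Arguments. Unset Strict Implicit. Unset Printing Implicit Defensive.
Import Order.TTheory GRing.Theory Num.Theory.
Local Open Scope ring_scope.

Definition adjmx (C : numClosedFieldType) (n : nat) (A : 'M[C]_n) : 'M[C]_n :=
  (map_mx (@Num.conj_op C) A)^T.

Definition unitary (C : numClosedFieldType) (n : nat) (A : 'M[C]_n) : Prop :=
  A *m adjmx A = 1%:M.

Definition sqnorm (C : numClosedFieldType) (n : nat) (v : 'cV[C]_n) : C :=
  \sum_(i < n) `|v i 0| ^+ 2.

(* An n-state MCQFA over the alphabet {a,b}, encoded as bool (a = false, b = true). *)
Record MCQFA (C : numClosedFieldType) (n : nat) := {
  trans : bool -> 'M[C]_n;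
  init : 'cV[C]_n;
  accepting : {set 'I_n}
}.

Definition MCQFA_wf (C : numClosedFieldType) (n : nat) (M : MCQFA C n) : Prop :=
  (forall s, unitary (trans M s)) /\ sqnorm (init M) = 1.

Definition final_state (C : numClosedFieldType) (n : nat) (M : MCQFA C n)
  (w : seq bool) : 'cV[C]_n :=
  foldl (fun v s => trans M s *m v) (init M) w.

Definition acc_prob (C : numClosedFieldType) (n : nat) (M : MCQFA C n)
  (w : seq bool) : C :=
  \sum_(i in accepting M) `|final_state M w i 0| ^+ 2.

(* Main.v *)
Require Import Defs.
From HB Require Import structures.
From mathcomp Require Import all_boot all_order all_algebra.
From mathcomp Require Import ring.
Set Implicit Arguments. Unset Strict Implicit. Unset Printing Implicit Defensive.
Import Order.TTheory GRing.Theory Num.Theory.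
Local Open Scope ring_scope.
Definition stepR (R : comRingType) (j : R) (s : bool) (pq : R * R) : R * R :=
  if s then (pq.1 + 2 * j * pq.2, 2 * j * pq.1 + pq.2)
  else (pq.1 - 2 * pq.2, 2 * pq.1 + pq.2).
Definition abR (R : comRingType) (j : R) (w : seq bool) := foldr (stepR j) (1, 0) w.
Definition DR (R : comRingType) (j : R) w x :=
  (abR j x).1 * (abR j w).2 - (abR j x).2 * (abR j w).1.

Lemma DR_cons (R : comRingType) (j : R) (hj : j * j = -1) s w x :
  DR j (s :: w) (s :: x) = 5%:R * DR j w x.
Proof.
rewrite /DR /=; case: s => /=.
  set p := (abR j x); set q := abR j w.
  transitivity ((1 - 4 * (j * j)) * (p.1 * q.2 - p.2 * q.1)); first by ring.
  by rewrite hj; ring.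
by ring.
Qed.

Definition G := (int * int)%type.
Definition gadd (z w : G) : G := (z.1 + w.1, z.2 + w.2).
Definition gmul (z w : G) : G := (z.1 * w.1 - z.2 * w.2, z.1 * w.2 + z.2 * w.1).
Definition gopp (z : G) : G := (- z.1, - z.2).
Definition stepG (s : bool) (pq : G * G) : G * G :=
  if s then (gadd pq.1 (gmul (0, 2) pq.2), gadd (gmul (0, 2) pq.1) pq.2)
  else (gadd pq.1 (gmul (-2, 0) pq.2), gadd (gmul (2, 0) pq.1) pq.2).
Definition abG w := foldr stepG ((1, 0), (0, 0)) w.
Definition DG w x := gadd (gmul (abG x).1 (abG w).2) (gopp (gmul (abG x).2 (abG w).1)).

Definition phi (R : comRingType) (j : R) (z : G) : R := z.1%:~R + z.2%:~R * j.

Section Phi.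
Variables (R : comRingType) (j : R).
Hypothesis hj : j * j = -1.
Lemma phi_add z w : phi j (gadd z w) = phi j z + phi j w.
Proof. by rewrite /phi /= !intrD; ring. Qed.
Lemma phi_opp z : phi j (gopp z) = - phi j z.
Proof. by rewrite /phi /= !intrN; ring. Qed.
Lemma phi_mul z w : phi j (gmul z w) = phi j z * phi j w.
Proof.
rewrite /phi /= !intrD !intrN !intrM.
transitivity ((z.1%:~R + z.2%:~R * j) * (w.1%:~R + w.2%:~R * j) - (1 + j * j) * (z.2%:~R * w.2%:~R) : R); first by ring.
by rewrite hj subrr mul0r subr0.
Qed.
Lemma phi_ab w : (phi j (abG w).1, phi j (abG w).2) = abR j w.
Proof.
elim: w => [|s w IH] /=; first by rewrite /phi /= mul0r !addr0 mulr0z.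
rewrite /abR /= -/(abR j w) -IH /stepG /stepR; case: s => /=;
  rewrite !phi_add !phi_mul /phi /=; congr (_, _); ring.
Qed.
Lemma phi_D w x : phi j (DG w x) = DR j w x.
Proof.
rewrite /DG /DR phi_add phi_opp !phi_mul -!phi_ab /=.
by [].
Qed.
End Phi.

Lemma phiC_inj (C : numClosedFieldType) (z : G) : phi ('i : C) z = 0 -> z = (0, 0).
Proof.
case: z => a b; rewrite /phi /= mulrC => h.
have hr := Re_rect (realz C a) (realz C b).
have hi := Im_rect (realz C a) (realz C b).
rewrite h in hr hi.
rewrite raddf0 in hr; rewrite raddf0 in hi.
have ha : a = 0 by apply/eqP; rewrite -(intr_eq0 C) -hr.
have hb : b = 0 by apply/eqP; rewrite -(intr_eq0 C) -hi.
by rewrite ha hb.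
Qed.

Definition j5 : 'F_5 := 3.
Lemma j5sq : j5 * j5 = -1. Proof. by apply/val_inj. Qed.
Lemma five5 : (5%:R : 'F_5) = 0. Proof. by apply/val_inj. Qed.

Definition coef (w : seq bool) : 'F_5 :=
  match w with [::] => 0 | false :: _ => 2 | true :: _ => 1 end.

Lemma inv5 w : (abR j5 w).1 != 0 /\ (abR j5 w).2 = coef w * (abR j5 w).1.
Proof.
elim: w => [|s w [IH1 IH2]]; first by split; [apply/eqP => /(congr1 val) | rewrite /= mul0r].
rewrite /abR /= -/(abR j5 w); set p := abR j5 w in IH1 IH2 *.
case: s => /=; split.
- rewrite IH2; have -> : p.1 + 2 * j5 * (coef w * p.1) = (1 + 2 * j5 * coef w) * p.1 by ring.
  by rewrite mulf_neq0 //; case: (w) => [|[] ?]; apply/eqP => /(congr1 val).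
- apply/eqP; rewrite -subr_eq0; apply/eqP.
  have -> : 2 * j5 * p.1 + p.2 - 1 * (p.1 + 2 * j5 * p.2) = (2 * j5 - 1) * (p.1 - p.2) by ring.
  have -> : 2 * j5 - 1 = 0 by apply/val_inj.
  by rewrite mul0r.
- rewrite IH2; have -> : p.1 - 2 * (coef w * p.1) = (1 - 2 * coef w) * p.1 by ring.
  by rewrite mulf_neq0 //; case: (w) => [|[] ?]; apply/eqP => /(congr1 val).
- apply/eqP; rewrite -subr_eq0; apply/eqP.
  have -> : 2 * p.1 + p.2 - 2 * (p.1 - 2 * p.2) = 5%:R * p.2 by ring.
  by rewrite five5 mul0r.
Qed.

Lemma DR5coef w x : DR j5 w x = (coef w - coef x) * ((abR j5 x).1 * (abR j5 w).1).
Proof.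
rewrite /DR; have [_ ->] := inv5 w; have [_ ->] := inv5 x; ring.
Qed.

Lemma coef_eq w x : DR j5 w x = 0 -> coef w = coef x.
Proof.
rewrite DR5coef => /eqP; rewrite mulf_eq0 => /orP [|]; first by rewrite subr_eq0 => /eqP.
by rewrite mulf_eq0 (negbTE (proj1 (inv5 x))) (negbTE (proj1 (inv5 w))).
Qed.

Lemma transfer (C : numClosedFieldType) w x : DR ('i : C) w x = 0 -> DR j5 w x = 0.
Proof.
rewrite -(phi_D (mulCii C)) => /phiC_inj hz.
by rewrite -(phi_D j5sq) hz /phi /= mul0r addr0.
Qed.

Lemma keyC (C : numClosedFieldType) w x : DR ('i : C) w x = 0 -> w = x.
Proof.
elim: w x => [|s w IH] [|t x] // h; have := coef_eq (transfer h).
- by case: t {h}; move/(congr1 val).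
- by case: s {h IH}; move/(congr1 val).
case: s t h => [] [] h //; try by move/(congr1 val).
- move=> _; rewrite DR_cons ?mulCii // in h; move/eqP: h; rewrite mulf_eq0 pnatr_eq0 /= => /eqP /IH ->; done.
- move=> _; rewrite DR_cons ?mulCii // in h; move/eqP: h; rewrite mulf_eq0 pnatr_eq0 /= => /eqP /IH ->; done.
Qed.

Section Two.
Variable C : numClosedFieldType.

Lemma cD (x y : C) : (x + y)^* = x^* + y^*. Proof. exact: rmorphD. Qed.
Lemma cB (x y : C) : (x - y)^* = x^* - y^*. Proof. exact: rmorphB. Qed.
Lemma cM (x y : C) : (x * y)^* = x^* * y^*. Proof. exact: rmorphM. Qed.
Lemma cN (x : C) : (- x)^* = - x^*. Proof. exact: rmorphN. Qed.
Lemma cX (x : C) n : (x ^+ n)^* = x^* ^+ n. Proof. exact: rmorphXn. Qed.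
Lemma c0 : (0 : C)^* = 0. Proof. exact: rmorph0. Qed.

Definition su (a b : C) : 'M[C]_2 :=
  \matrix_(i, j) if (i : nat) == 0%N then (if (j : nat) == 0%N then a else b)
                 else (if (j : nat) == 0%N then - b^* else a^*).

Lemma sum2 (F : 'I_2 -> C) : \sum_(i < 2) F i = F ord0 + F ord_max.
Proof. by rewrite !big_ord_recl big_ord0 addr0; congr (_ + F _); apply/val_inj. Qed.

Lemma suM a b c d : su a b *m su c d = su (a * c - b * d^*) (a * d + b * c^*).
Proof.
apply/matrixP => i j; rewrite !mxE sum2 !mxE /=.
case: i => [[|[|//]] ?]; case: j => [[|[|//]] ?] /=;
  rewrite ?cB ?cD ?cM ?cN ?conjCK; ring.
Qed.

Lemma su_adj a b : adjmx (su a b) = su a^* (- b).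
Proof.
apply/matrixP => i j; rewrite !mxE.
case: i => [[|[|//]] ?]; case: j => [[|[|//]] ?] /=; rewrite ?cN ?conjCK ?opprK //.
Qed.

Lemma su10 : su 1 0 = 1%:M.
Proof.
apply/matrixP => i j; rewrite !mxE.
case: i => [[|[|//]] ?]; case: j => [[|[|//]] ?] /=; by rewrite ?conjC1 ?c0 ?oppr0.
Qed.

Definition cc : C := (sqrtC 5)^-1.
Lemma cc_conj : cc^* = cc.
Proof. by apply: conj_Creal; apply: ger0_real; rewrite /cc invr_ge0 sqrtC_ge0 ler0n. Qed.
Lemma cc2 : cc * cc * 5%:R = 1.
Proof.
rewrite /cc -invfM -expr2 sqrtCK mulVf //.
by rewrite pnatr_eq0.
Qed.
Lemma cc_neq0 : cc != 0.
Proof. by rewrite /cc invr_eq0 sqrtC_eq0 pnatr_eq0. Qed.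

Definition jC (s : bool) : C := if s then 2 * 'i else 2.
Definition U (s : bool) : 'M[C]_2 := cc *: su 1 (jC s).
Definition Uw (w : seq bool) : 'M[C]_2 := foldl (fun M s => U s *m M) 1 w.

Lemma foldl_mul w (M : 'M[C]_2) : foldl (fun M s => U s *m M) M w = Uw w *m M.
Proof.
rewrite /Uw; elim: w M => [|s w IH] M /=; first by rewrite mul1mx.
by rewrite IH [in RHS]IH mulmx1 mulmxA.
Qed.

Lemma Uw_cons s w : Uw (s :: w) = Uw w *m U s.
Proof. by rewrite {1}/Uw /= mulmx1 foldl_mul. Qed.

Lemma Uw_su w : Uw w = cc ^+ size w *: su (abR ('i : C) w).1 (abR ('i : C) w).2.
Proof.
elim: w => [|s w IH]; first by rewrite /Uw /= expr0 scale1r su10.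
rewrite Uw_cons IH /U -scalemxAl -scalemxAr scalerA suM /= exprS mulrC.
congr (_ *: _); rewrite /abR /= -/(abR 'i w) /stepR /jC; case: s => /=;
  rewrite ?conjC1 ?cM ?conjCi ?conjC_nat; congr su; ring.
Qed.

Lemma U_unitary s : unitary (U s).
Proof.
rewrite /unitary /U.
have -> : adjmx (cc *: su 1 (jC s)) = cc *: adjmx (su 1 (jC s)).
  by apply/matrixP => i j; rewrite !mxE cM cc_conj.
rewrite su_adj -scalemxAl -scalemxAr scalerA suM !conjC1.
have -> : 1 * 1 - jC s * (- jC s)^* = 5%:R.
  rewrite /jC; case: s; rewrite ?cN ?cM ?conjCi ?conjC_nat.
    transitivity (1 - 4%:R * ('i * 'i) : C); first by ring.
    by rewrite mulCii; ring.
  by ring.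
rewrite mulr1 mul1r addNr.
apply/matrixP => i j; rewrite !mxE.
case: i => [[|[|//]] ?]; case: j => [[|[|//]] ?] /=;
  rewrite ?c0 ?oppr0 ?mulr0 ?mulr1 // ?conjC_nat cc2 //.
Qed.

Definition dv (x : seq bool) : 'cV[C]_2 :=
  \col_i (cc ^+ size x * (if (i : nat) == 0%N then - (abR ('i : C) x).2 else (abR ('i : C) x).1)).

Lemma amp w x : (Uw w *m dv x) ord0 ord0 = cc ^+ (size w + size x) * DR ('i : C) w x.
Proof.
rewrite Uw_su !mxE sum2 !mxE /= /DR exprD; ring.
Qed.

Lemma nrm w : (abR ('i : C) w).1 * (abR ('i : C) w).1^* + (abR ('i : C) w).2 * (abR ('i : C) w).2^* = 5%:R ^+ size w.
Proof.
elim: w => [|s w IH] /=; first by rewrite conjC1 c0 mulr0 addr0 mulr1 expr0.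
rewrite /abR /= -/(abR 'i w) /stepR exprS -IH; case: s => /=;
  rewrite ?cD ?cB ?cM ?conjCi ?conjC_nat.
  transitivity ((1 - 4%:R * ('i * 'i)) * ((abR ('i : C) w).1 * (abR ('i : C) w).1^* + (abR ('i : C) w).2 * (abR ('i : C) w).2^*)); first by ring.
  by rewrite mulCii; congr (_ * _); ring.
ring.
Qed.

Lemma dv_norm x : sqnorm (dv x) = 1.
Proof.
rewrite /sqnorm sum2 !mxE /= !normCK !cM !cN !cX cc_conj.
transitivity ((cc * cc) ^+ size x * ((abR ('i : C) x).1 * (abR ('i : C) x).1^* + (abR ('i : C) x).2 * (abR ('i : C) x).2^*)); first by rewrite exprMn; ring.
by rewrite nrm -exprMn cc2 expr1n.
Qed.

End Two.

Section Tens.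
Variables (C : numClosedFieldType) (k : nat).

Definition Tf := {ffun 'I_k -> 'I_2}.
Lemma Hcard : (2 ^ k)%N = #|{: Tf}|.
Proof. by rewrite card_ffun !card_ord. Qed.
Definition bits (i : 'I_(2 ^ k)) : Tf := enum_val (cast_ord Hcard i).
Definition unbits (f : Tf) : 'I_(2 ^ k) := cast_ord (esym Hcard) (enum_rank f).
Lemma bitsK : cancel bits unbits.
Proof. by move=> i; rewrite /bits /unbits enum_valK cast_ordK. Qed.
Lemma unbitsK : cancel unbits bits.
Proof. by move=> f; rewrite /bits /unbits cast_ordKV enum_rankK. Qed.

Lemma sum_bits (f : 'I_k -> 'I_2 -> C) :
  \sum_(t : 'I_(2 ^ k)) \prod_l f l (bits t l) = \prod_l \sum_(b : 'I_2) f l b.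
Proof.
rewrite bigA_distr_bigA (reindex unbits) /=; last by exists bits => x _; [exact: unbitsK | exact: bitsK].
by apply: eq_bigr => g _; rewrite unbitsK.
Qed.

Definition K (F : 'I_k -> 'M[C]_2) : 'M[C]_(2 ^ k) :=
  \matrix_(i, j) \prod_l F l (bits i l) (bits j l).
Definition Kv (G : 'I_k -> 'cV[C]_2) : 'cV[C]_(2 ^ k) :=
  \col_i \prod_l G l (bits i l) ord0.

Lemma KM F G : K F *m K G = K (fun l => F l *m G l).
Proof.
apply/matrixP => i j; rewrite /K /Kv !mxE.
transitivity (\sum_t \prod_l (F l (bits i l) (bits t l) * G l (bits t l) (bits j l))).
  by apply: eq_bigr => t _; rewrite !mxE big_split.
rewrite (sum_bits (fun l b => F l (bits i l) b * G l b (bits j l))).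
by apply: eq_bigr => l _; rewrite mxE.
Qed.

Lemma KMv F G : K F *m Kv G = Kv (fun l => F l *m G l).
Proof.
apply/matrixP => i j; rewrite /K /Kv !mxE.
transitivity (\sum_t \prod_l (F l (bits i l) (bits t l) * G l (bits t l) ord0)).
  by apply: eq_bigr => t _; rewrite !mxE big_split.
rewrite (sum_bits (fun l b => F l (bits i l) b * G l b ord0)).
by apply: eq_bigr => l _; rewrite mxE.
Qed.

Lemma K1 : K (fun _ => 1%:M) = 1%:M.
Proof.
apply/matrixP => i j; rewrite !mxE.
have [<-|nij] := eqVneq i j.
  by rewrite big1 // => l _; rewrite mxE eqxx.
have H : bits i != bits j by apply: contra nij => /eqP h; rewrite -(bitsK i) h bitsK.
have [l hl] : exists l, bits i l != bits j l.
  apply/existsP; apply: contraR H => /existsPn h; apply/eqP/ffunP => l.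
  by apply/eqP; move: (h l); rewrite negbK.
by rewrite (bigD1 l) //= mxE (negbTE hl) mul0r.
Qed.

Lemma Kadj F : adjmx (K F) = K (fun l => adjmx (F l)).
Proof.
apply/matrixP => i j; rewrite /adjmx /K !mxE rmorph_prod.
by apply: eq_bigr => l _; rewrite !mxE.
Qed.

Lemma Kv_norm G : sqnorm (Kv G) = \prod_l sqnorm (G l).
Proof.
rewrite /sqnorm /Kv.
transitivity (\sum_t \prod_l `|G l (bits t l) ord0| ^+ 2).
  by apply: eq_bigr => t _; rewrite mxE normr_prod ?prodrXl ?prodrXr.
rewrite (sum_bits (fun l b => `|G l b ord0| ^+ 2)).
by [].
Qed.

End Tens.

Lemma eq_Kv (C : numClosedFieldType) k (G G' : 'I_k -> 'cV[C]_2) :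
  (forall l, G l = G' l) -> Kv G = Kv G'.
Proof. by move=> h; apply/matrixP => i j; rewrite !mxE; apply: eq_bigr => l _; rewrite h. Qed.

Lemma fold_K (C : numClosedFieldType) k (G : 'I_k -> 'cV[C]_2) w :
  foldl (fun v s => K (fun _ : 'I_k => U C s) *m v) (Kv G) w = Kv (fun l => Uw C w *m G l).
Proof.
elim: w G => [|s w IH] G /=; first by apply: eq_Kv => l; rewrite /Uw /= mul1mx.
rewrite KMv IH; apply: eq_Kv => l; by rewrite Uw_cons mulmxA.
Qed.

Lemma DR_refl (C : numClosedFieldType) w : DR ('i : C) w w = 0.
Proof. by rewrite /DR mulrC subrr. Qed.

Theorem mainTheorem15 (C : numClosedFieldType) (X Y : seq (seq bool)) :
  uniq X -> uniq Y ->
  (forall w, w \in X -> w \notin Y) ->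
  (1 <= size X <= size Y)%N ->
  exists M : MCQFA C (2 ^ size X),
    MCQFA_wf M /\
    (forall w, w \in X -> acc_prob M w = 0) /\
    (forall w, w \in Y -> acc_prob M w != 0).
Proof.
move=> _ _ hXY _.
pose i0 := unbits [ffun _ : 'I_(size X) => (ord0 : 'I_2)].
exists (Build_MCQFA (fun s => K (fun _ : 'I_(size X) => U C s))
   (Kv (fun l : 'I_(size X) => dv C (nth [::] X l))) [set i0]).
have accE w : acc_prob (Build_MCQFA (fun s => K (fun _ : 'I_(size X) => U C s))
   (Kv (fun l : 'I_(size X) => dv C (nth [::] X l))) [set i0]) w =
   `| \prod_(l < size X) (cc C ^+ (size w + size (nth [::] X l)) * DR ('i : C) w (nth [::] X l)) | ^+ 2.
  rewrite /acc_prob /final_state /= big_set1 fold_K mxE /i0 unbitsK.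
  by congr (`| _ | ^+ 2); apply: eq_bigr => l _; rewrite ffunE amp.
split; [split|split].
- move=> s /=; rewrite /unitary Kadj KM (@U_unitary C s); exact: K1.
- by rewrite /= Kv_norm big1 // => l _; rewrite dv_norm.
- move=> w wX; rewrite accE.
  have lt : (index w X < size X)%N by rewrite index_mem.
  rewrite (bigD1 (Ordinal lt)) //= nth_index // DR_refl mulr0 mul0r normr0 expr0n //.
- move=> w wY; rewrite accE expf_eq0 /= normr_eq0; apply/negP => /prodf_eq0 [l _].
  rewrite mulf_eq0 expf_eq0 (negbTE (cc_neq0 C)) andbF /= => /eqP /keyC hw.
  have : w \in X by rewrite hw mem_nth.
  by move/hXY; rewrite wY.
Qed.
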